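(* Let $S$ be the set of $\mathcal{G}$-invariant elements of $L_2(\mathcal{X},\mathcal{Y},\mu)$. For every $f\in L_2(\mathcal{X},\mathcal{Y},\mu)$, the function $\bar f=\mathcal{O}f$ is the unique solution of the least squares problem $\bar f=\operatorname{argmin}_{s\in S}\|f-s\|_\mu^2$.
   Context: $\mathcal{G}$ is a compact, second countable, Hausdorff topological group with Haar probability measure $\lambda$. $\mathcal{X}$ is a nonempty Polish space on which $\mathcal{G}$ acts measurably, $(g,x)\mapsto gx$. $\mathcal{Y}=\mathbb{R}^k$ with an inner product $\langle\cdot,\cdot\rangle$ and norm $\|\cdot\|$. $\mu$ is a $\mathcal{G}$-invariant Borel probability measure on $\mathcal{X}$. $L_2(\mathcal{X},\mathcal{Y},\mu)$ is the Hilbert space of $\mu$-a.e. classes of measurable $f:\mathcal{X}\to\mathcal{Y}$ with $\|f\|_\mu^2=\int\|f(x)\|^2d\mu(x)<\infty$, inner product $\langle f,h\rangle_\mu=\int\langle f(x),h(x)\rangle d\mu(x)$. A function $f$ is $\mathcal{G}$-invariant if $f(gx)=f(x)$ for all $g,x$. The orbit averaging operator is $\mathcal{O}f(x)=\int_\mathcal{G}f(gx)\,d\lambda(g)$. Uniqueness is as elements of $L_2(\mathcal{X},\mathcal{Y},\mu)$. *)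

(* Defs.v *)
From HB Require Import structures.
From mathcomp Require Import all_boot all_order all_algebra.
From mathcomp Require Import all_classical all_reals all_analysis.
Set Implicit Arguments. Unset Strict Implicit. Unset Printing Implicit Defensive.
Import Order.TTheory GRing.Theory Num.Theory.
Local Open Scope classical_set_scope.
Local Open Scope ring_scope.

Notation borel T := (g_sigma_algebraType (@open T)).

Definition is_group (G : Type) (mul : G -> G -> G) (inv : G -> G) (one : G) :=
  [/\ forall a b c, mul a (mul b c) = mul (mul a b) c,
      forall a, mul one a = a,
      forall a, mul a one = a,
      forall a, mul (inv a) a = one &
      forall a, mul a (inv a) = one].

Definition is_topological_group (G : topologicalType)
  (mul : G -> G -> G) (inv : G -> G) (one : G) :=
  [/\ is_group mul inv one,
      continuous (fun p : G * G => mul p.1 p.2) &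
      continuous inv].

Definition is_haar_probability (R : realType) (G : ptopologicalType)
  (mul : G -> G -> G) (lam : probability (borel G) R) :=
  forall (g : G) (A : set (borel G)), measurable A ->
    lam [set mul g h | h in A] = lam A.

Definition is_polish (R : realType) (X : topologicalType) :=
  exists d : X -> X -> R,
  [/\
      [/\ forall x y, 0 <= d x y, forall x y, d x y = 0 <-> x = y,
          forall x y, d x y = d y x &
          forall x y z, d x z <= d x y + d y z],
      (forall A : set X, open A <->
         (forall x, A x -> exists e : R, 0 < e /\ [set y | d x y < e] `<=` A)),
      (forall u : nat -> X,
         (forall e : R, 0 < e -> exists N, forall n m, (N <= n)%N -> (N <= m)%N ->
            d (u n) (u m) < e) ->
         exists l, forall e : R, 0 < e -> exists N, forall n, (N <= n)%N -> d (u n) l < e) &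
      (exists2 D : set X, countable D & closure D = setT)].

Definition is_action (G X : Type) (mul : G -> G -> G) (one : G) (act : G -> X -> X) :=
  (forall x, act one x = x) /\ (forall g h x, act (mul g h) x = act g (act h x)).

Definition is_inner_product (R : realType) (k : nat)
  (ip : 'rV[R]_k -> 'rV[R]_k -> R) :=
  [/\ forall u v, ip u v = ip v u,
      forall a u v w, ip (a *: u + v) w = a * ip u w + ip v w &
      forall u, u != 0 -> 0 < ip u u].

Section L2.
Context {d : measure_display} {T : measurableType d} {R : realType} {k : nat}.

(* measurable Y-valued function (Borel sigma-algebra of R^k = product) *)
Definition vmeasurable (f : T -> 'rV[R]_k) :=
  forall i : 'I_k, measurable_fun setT (fun x => f x ord0 i).

Definition L2norm2 (mu : {measure set T -> \bar R}) (ip : 'rV[R]_k -> 'rV[R]_k -> R)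
  (f : T -> 'rV[R]_k) : \bar R :=
  (\int[mu]_x (ip (f x) (f x))%:E)%E.

Definition inL2 (mu : {measure set T -> \bar R}) ip (f : T -> 'rV[R]_k) :=
  vmeasurable f /\ (L2norm2 mu ip f < +oo)%E.
End L2.

Definition invariant (G X Y : Type) (act : G -> X -> X) (f : X -> Y) :=
  forall g x, f (act g x) = f x.

(* s is an (invariant representative of an) element of S *)
Definition inS (R : realType) (k : nat) (G : Type) {d} (X : measurableType d)
  (act : G -> X -> X) (mu : {measure set X -> \bar R}) ip (s : X -> 'rV[R]_k) :=
  inL2 mu ip s /\ invariant act s.

(* the L2 class of h belongs to S *)
Definition class_inS (R : realType) (k : nat) (G : Type) {d} (X : measurableType d)
  (act : G -> X -> X) (mu : {measure set X -> \bar R}) ip (h : X -> 'rV[R]_k) :=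
  exists2 s, inS act mu ip s & {ae mu, forall x, h x = s x}.

Definition orbit_avg (R : realType) (k : nat) {dG} (G : measurableType dG) (X : Type)
  (lam : {measure set G -> \bar R}) (act : G -> X -> X) (f : X -> 'rV[R]_k) :
  X -> 'rV[R]_k :=
  fun x => \row_(i < k) Rintegral lam setT (fun g => f (act g x) ord0 i).

(* Main.v *)
From Pilot Require Import Defs.
From HB Require Import structures.
From mathcomp Require Import all_boot all_order all_algebra.
From mathcomp Require Import all_classical all_reals all_analysis.
From mathcomp Require Import measurable_realfun.
From mathcomp Require Import ring lra.
Import Order.TTheory GRing.Theory Num.Theory.
Local Open Scope classical_set_scope.
Local Open Scope ring_scope.
Set Implicit Arguments. Unset Strict Implicit.

Section Grp.
Variables (G : Type) (mul : G -> G -> G) (inv : G -> G) (one : G).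
Hypothesis H : is_group mul inv one.
Lemma grp_invK a : inv (inv a) = a.
Proof.
case: H => A l1 r1 lv rv.
by rewrite -[LHS]r1 -(lv a) A lv l1.
Qed.
Lemma grp_invM a b : inv (mul a b) = mul (inv b) (inv a).
Proof.
case: H => A l1 r1 lv rv.
have e: mul (mul a b) (mul (inv b) (inv a)) = one.
  by rewrite -A (A b) rv l1 rv.
by rewrite -[LHS]r1 -e A lv l1.
Qed.
Lemma grp_mulK a b : mul (inv a) (mul a b) = b.
Proof. by case: H => A l1 r1 lv rv; rewrite A lv l1. Qed.
End Grp.

Lemma cont_meas (S T : ptopologicalType) (f : S -> T) : continuous f ->
  measurable_fun setT (f : borel S -> borel T).
Proof.
move=> cf.
apply: (@measurability _ _ (borel S) (borel T) setT f (@open T)) => //.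
move=> A [B oB <-]; apply: sub_gen_smallest; rewrite setTI.
by apply: open_comp => // x _; exact: cf.
Qed.

Lemma cont_mul_l (G : ptopologicalType) (mul : G -> G -> G) (c : G) :
  continuous (fun p : G * G => mul p.1 p.2) -> continuous (mul c).
Proof.
move=> cm x.
have := @continuous_comp G (G * G)%type G (fun g => (c, g)) (fun p => mul p.1 p.2) x.
apply; last exact: cm.
exact: (cvg_pair (cvg_cst c) cvg_id).

Qed.

Lemma grp_mulKV (G : Type) (mul : G -> G -> G) (inv : G -> G) (one : G) :
  is_group mul inv one -> forall a b, mul a (mul (inv a) b) = b.
Proof. by case=> A l1 r1 lv rv a b; rewrite A rv l1. Qed.
Section IP.
Variables (R : realType) (k : nat) (ip : 'rV[R]_k -> 'rV[R]_k -> R).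
Hypothesis Hip : is_inner_product ip.
Let Q u := ip u u.

Lemma ipC u v : ip u v = ip v u. Proof. by case: Hip. Qed.
Lemma ip0l w : ip 0 w = 0.
Proof.
case: Hip => _ L _; have := L 1 0 0 w; rewrite scale1r addr0 mul1r.
move=> e; lra.
Qed.
Lemma ipDl u v w : ip (u + v) w = ip u w + ip v w.
Proof. by case: Hip => _ L _; have := L 1 u v w; rewrite scale1r mul1r. Qed.
Lemma ipZl a u w : ip (a *: u) w = a * ip u w.
Proof. by case: Hip => _ L _; rewrite -(addr0 (a *: u)) L ip0l addr0. Qed.
Lemma ipNl u w : ip (- u) w = - ip u w.
Proof. by rewrite -scaleN1r ipZl mulN1r. Qed.
Lemma ipBl u v w : ip (u - v) w = ip u w - ip v w.
Proof. by rewrite ipDl ipNl. Qed.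
Lemma ipDr u v w : ip w (u + v) = ip w u + ip w v.
Proof. by rewrite ipC ipDl !(ipC w). Qed.
Lemma ipZr a u w : ip w (a *: u) = a * ip w u.
Proof. by rewrite ipC ipZl ipC. Qed.
Lemma ipNr u w : ip w (- u) = - ip w u.
Proof. by rewrite ipC ipNl ipC. Qed.
Lemma ipBr u v w : ip w (u - v) = ip w u - ip w v.
Proof. by rewrite ipDr ipNr. Qed.
Lemma ip0r w : ip w 0 = 0.
Proof. by rewrite ipC ip0l. Qed.
Lemma Q_ge0 u : 0 <= ip u u.
Proof.
case: Hip => _ _ P; have [->|/P/ltW//] := eqVneq u 0; by rewrite ip0l.
Qed.
Lemma Q_eq0 u : ip u u = 0 -> u = 0.
Proof.
case: Hip => _ _ P; have [//|/P] := eqVneq u 0; by move=> /[swap] ->; rewrite ltxx.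
Qed.
Lemma QD u v : ip (u + v) (u + v) = ip u u + 2 * ip u v + ip v v.
Proof. rewrite ipDl !ipDr (ipC v u); ring. Qed.
Lemma QB u v : ip (u - v) (u - v) = ip u u - 2 * ip u v + ip v v.
Proof. rewrite ipBl !ipBr (ipC v u); ring. Qed.
Lemma ip_bound u v : `|ip u v| <= ip u u + ip v v.
Proof.
have h1 := Q_ge0 (u + v); have h2 := Q_ge0 (u - v).
rewrite QD in h1; rewrite QB in h2.
have hu := Q_ge0 u; have hv := Q_ge0 v.
rewrite ler_norml; apply/andP; split; lra.
Qed.
Lemma QB_bound u v : ip (u - v) (u - v) <= 2 * (ip u u + ip v v).
Proof.
have h1 := Q_ge0 (u + v); rewrite QD in h1; rewrite QB; lra.
Qed.

Lemma ip_sum I (r : seq I) (P : pred I) (F : I -> 'rV[R]_k) w :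
  ip (\sum_(i <- r | P i) F i) w = \sum_(i <- r | P i) ip (F i) w.
Proof.
elim: r => [|a r IH]; first by rewrite !big_nil ip0l.
by rewrite !big_cons; case: (P a); rewrite ?ipDl IH.
Qed.

Lemma ip_expand u w :
  ip u w = \sum_(i < k) u ord0 i * ip (delta_mx ord0 i) w.
Proof.
rewrite {1}(row_sum_delta u) ip_sum; apply: eq_bigr => i _; by rewrite ipZl.
Qed.

Lemma ip_expand2 u v :
  ip u v = \sum_(i < k) \sum_(j < k)
     u ord0 i * v ord0 j * ip (delta_mx ord0 i) (delta_mx ord0 j).
Proof.
rewrite ip_expand; apply: eq_bigr => i _.
rewrite ipC ip_expand mulr_sumr; apply: eq_bigr => j _.
by rewrite ipC mulrA.
Qed.

Lemma ip_coord (i : 'I_k) : exists w, forall u, ip u w = u ord0 i.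
Proof.
pose A : 'M[R]_k := \matrix_(j, l) ip (delta_mx ord0 j) (delta_mx ord0 l).
have vA : forall (v : 'rV[R]_k) a, (v *m A) ord0 a = ip v (delta_mx ord0 a).
  move=> v a; rewrite mxE ip_expand; apply: eq_bigr => b _; by rewrite mxE.
have Ainj : forall v : 'rV[R]_k, v *m A = 0 -> v = 0.
  move=> v vA0; apply: Q_eq0.
  rewrite ip_expand big1 // => a _.
  by rewrite ipC -vA vA0 mxE mulr0.
have Aunit : A \in unitmx.
  rewrite -row_free_unit -kermx_eq0; apply/eqP/row_matrixP => r.
  rewrite row0; apply: Ainj; by rewrite -row_mul mulmx_ker row0.
exists (delta_mx ord0 i *m invmx A) => u.
rewrite ip_expand (bigD1 i) //= big1 ?addr0.
  by rewrite ipC -vA mulmxKV // mxE !eqxx mulr1.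
move=> j ji; rewrite ipC -vA mulmxKV // mxE eqxx /=.
by rewrite (negbTE ji) mulr0.
Qed.
End IP.
Section L2gen.
Context d {T : measurableType d} {R : realType} {k : nat}.
Variables (ip : 'rV[R]_k -> 'rV[R]_k -> R).
Hypothesis Hip : is_inner_product ip.
Implicit Types (u v : T -> 'rV[R]_k).

Lemma ip_meas u v : vmeasurable u -> vmeasurable v ->
  measurable_fun setT (fun x => ip (u x) (v x)).
Proof.
move=> mu mv.
rewrite (_ : (fun x => _) = fun x => \sum_(i < k) \sum_(j < k)
     u x ord0 i * v x ord0 j * ip (delta_mx ord0 i) (delta_mx ord0 j)); last first.
  by apply/funext => x; rewrite (ip_expand2 Hip).
apply: measurable_sum => i; apply: measurable_sum => j.
apply: measurable_funM; last exact: measurable_cst.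
exact: measurable_funM.
Qed.

Lemma vmeasB u v : vmeasurable u -> vmeasurable v ->
  vmeasurable (fun x => u x - v x).
Proof.
move=> mu mv i.
rewrite (_ : (fun x => _) = fun x => u x ord0 i - v x ord0 i); last first.
  by apply/funext => x; rewrite !mxE.
exact: measurable_funB.
Qed.

Lemma Q_meas u : vmeasurable u -> measurable_fun setT (fun x => (ip (u x) (u x))%:E).
Proof. by move=> mu; apply/measurable_EFinP; exact: ip_meas. Qed.

Variable mu : {measure set T -> \bar R}.

Lemma Q_int u : inL2 mu ip u -> mu.-integrable setT (fun x => (ip (u x) (u x))%:E).
Proof.
move=> [mu' fin]; apply/integrableP; split; first exact: Q_meas.
rewrite (eq_integral (fun x => (ip (u x) (u x))%:E)) //.
by move=> x _; rewrite /= ger0_norm // (Q_ge0 Hip).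
Qed.

Lemma ip_int u v : inL2 mu ip u -> inL2 mu ip v ->
  mu.-integrable setT (fun x => (ip (u x) (v x))%:E).
Proof.
move=> hu hv.
apply: (@le_integrable _ _ _ mu setT measurableT _ (fun x => (ip (u x) (u x))%:E + (ip (v x) (v x))%:E)%E).
- by apply/measurable_EFinP; apply: ip_meas; [case: hu|case: hv].
- move=> x _ /=; rewrite !lee_fin.
  rewrite [X in _ <= X]ger0_norm; first exact: (ip_bound Hip).
  by rewrite addr_ge0 // (Q_ge0 Hip).
- exact: integrableD (Q_int hu) (Q_int hv).
Qed.

Lemma inL2B u v : inL2 mu ip u -> inL2 mu ip v -> inL2 mu ip (fun x => u x - v x).
Proof.
move=> hu hv; split; first by apply: vmeasB; [case: hu|case: hv].
rewrite /L2norm2.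
apply: (@le_lt_trans _ _ (\int[mu]_x (2%:E * ((ip (u x) (u x))%:E + (ip (v x) (v x))%:E)))%E).
  apply: ge0_le_integral => //.
  - by move=> x _; rewrite lee_fin (Q_ge0 Hip).
  - exact: (Q_meas (vmeasB hu.1 hv.1)).
  - apply: emeasurable_funM; first exact: measurable_cst.
    by apply: emeasurable_funD; [exact: (Q_meas hu.1)|exact: (Q_meas hv.1)].
  - by move=> x _; rewrite -EFinD -EFinM lee_fin (QB_bound Hip).
apply: integrable_lty => //.
apply: integrableZl => //.
exact: integrableD (Q_int hu) (Q_int hv).
Qed.

End L2gen.

Section L2fin.
Context d {T : measurableType d} {R : realType} {k : nat}.
Variables (ip : 'rV[R]_k -> 'rV[R]_k -> R).
Hypothesis Hip : is_inner_product ip.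
Variable mu : {finite_measure set T -> \bar R}.

Lemma coord_int (u : T -> 'rV[R]_k) i : inL2 mu ip u ->
  mu.-integrable setT (fun x => (u x ord0 i)%:E).
Proof.
move=> hu; have [w hw] := ip_coord Hip i.
apply: (@le_integrable _ _ _ mu setT measurableT _ (fun x => (ip (u x) (u x))%:E + (ip w w)%:E)%E).
- by apply/measurable_EFinP; case: hu.
- move=> x _ /=; rewrite !lee_fin -hw.
  rewrite [X in _ <= X]ger0_norm; first exact: (ip_bound Hip).
  by rewrite addr_ge0 // (Q_ge0 Hip).
- apply: integrableD => //; first exact: (Q_int Hip).
  exact: finite_measure_integrable_cst.
Qed.
End L2fin.
Section Push.
Context d {T : measurableType d} {R : realType}.
Local Open Scope ereal_scope.

Lemma push_int (m : {measure set T -> \bar R}) (phi : T -> T)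
  (mphi : measurable_fun setT phi)
  (H : forall A, measurable A -> m (phi @^-1` A) = m A)
  (F : T -> \bar R) (mF : measurable_fun setT F) :
  \int[m]_x F (phi x) = \int[m]_x F x.
Proof.
have e : forall h : T -> \bar R, measurable_fun setT h -> (forall x, 0 <= h x) ->
    \int[m]_x h (phi x) = \int[m]_x h x.
  move=> h mh h0.
  rewrite -[LHS]/(\int[m]_(x in phi @^-1` setT) (h \o phi) x).
  rewrite -ge0_integral_pushforward //.
  by apply: eq_measure_integral => A mA _ /=; rewrite /pushforward H.
rewrite integralE [RHS]integralE.
rewrite (_ : (fun x => F (phi x))^\+ = F^\+ \o phi); last by rewrite -funepos_comp.
rewrite (_ : (fun x => F (phi x))^\- = F^\- \o phi); last by rewrite -funeneg_comp.
rewrite /= e //; last exact: measurable_funepos.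
rewrite e //; exact: measurable_funeneg.
Qed.

Lemma int_cst_prob (P : probability T R) (c : \bar R) : \int[P]_x c = c.
Proof. by rewrite -[c in RHS]mule1 -(probability_setT P) -integral_cst. Qed.

End Push.
Section Main.
Variables (R : realType) (G : ptopologicalType) (mul : G -> G -> G) (inv : G -> G) (one : G).
Hypothesis HG : is_topological_group mul inv one.
Variable lam : probability (borel G) R.
Hypothesis Hlam : is_haar_probability mul lam.
Variable X : ptopologicalType.
Variable act : G -> X -> X.
Hypothesis Hact : is_action mul one act.
Hypothesis Hactm : measurable_fun setT (fun p : (borel G * borel X)%type => (act p.1 p.2 : borel X)).
Variable mu : probability (borel X) R.
Hypothesis Hmu : forall (g : G) (A : set (borel X)), measurable A -> mu (act g @^-1` A) = mu A.

Let Hgrp : is_group mul inv one. Proof. by case: HG. Qed.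
Let actM g h x : act (mul g h) x = act g (act h x). Proof. by case: Hact => _ ->. Qed.

Lemma mact_l (y : X) : measurable_fun setT (fun g : borel G => (act g y : borel X)).
Proof.
apply: (measurableT_comp Hactm (g := fun g : borel G => (g, (y : borel X)))).
exact: measurable_fun_pair.
Qed.

Lemma mact_r (g : G) : measurable_fun setT (fun x : borel X => (act g x : borel X)).
Proof.
apply: (measurableT_comp Hactm (g := fun x : borel X => ((g : borel G), x))).
exact: measurable_fun_pair.
Qed.

Lemma minv : measurable_fun setT (inv : borel G -> borel G).
Proof. by apply: cont_meas; case: HG. Qed.

Lemma mmul c : measurable_fun setT (mul c : borel G -> borel G).
Proof. by apply: cont_meas; apply: cont_mul_l; case: HG. Qed.

Local Open Scope ereal_scope.

Lemma Linv (c : G) (Psi : borel G -> \bar R) : measurable_fun setT Psi ->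
  \int[lam]_g Psi (mul c g) = \int[lam]_g Psi g.
Proof.
move=> mPsi; apply: push_int => //; first exact: mmul.
move=> A mA; transitivity (lam [set mul (inv c) h | h in A]); last exact: Hlam.
congr (lam _).
apply/seteqP; split => x /=.
- by move=> Ac; exists (mul c x) => //; rewrite (grp_mulK Hgrp).
- by case=> h Ah <-; rewrite (grp_mulKV Hgrp).
Qed.

Lemma L2ge0 (F : borel X -> \bar R) (y : X) : measurable_fun setT F ->
  (forall x, 0 <= F x) ->
  \int[lam]_a F (act (inv a) y) = \int[lam]_a F (act a y).
Proof.
move=> mF F0.
have mF2 : measurable_fun setT
    (fun p : (borel G * borel G)%type => F (act (inv p.1) (act p.2 y))).
  apply: (measurableT_comp mF (g := fun p : (borel G * borel G)%type => (act (inv p.1) (act p.2 y) : borel X))).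
  apply: (measurableT_comp Hactm (g := fun p : (borel G * borel G)%type => ((inv p.1 : borel G), (act p.2 y : borel X)))).
  apply: measurable_fun_pair.
    exact: (measurableT_comp minv measurable_fst).
  exact: (measurableT_comp (mact_l y) measurable_snd).
have E := fubini_tonelli (m1 := lam) (m2 := lam) _ mF2 (fun p => F0 _).
rewrite /= in E.
have mPsi1 : measurable_fun setT (fun c : borel G => F (act c y)).
  exact: (measurableT_comp mF (mact_l y)).
have mPsi2 : measurable_fun setT (fun c : borel G => F (act (inv c) y)).
  exact: (measurableT_comp mPsi1 minv).
have E1 : \int[lam]_a \int[lam]_b F (act (inv a) (act b y)) = \int[lam]_b F (act b y).
  rewrite (eq_integral (fun _ => \int[lam]_b F (act b y))) ?int_cst_prob //.
  move=> a _; rewrite -(Linv (inv a) mPsi1).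
  by apply: eq_integral => b _; rewrite actM.
have E2 : \int[lam]_b \int[lam]_a F (act (inv a) (act b y)) = \int[lam]_a F (act (inv a) y).
  rewrite (eq_integral (fun _ => \int[lam]_a F (act (inv a) y))) ?int_cst_prob //.
  move=> b _; rewrite -(Linv (inv b) mPsi2).
  apply: eq_integral => a _.
  by rewrite (grp_invM Hgrp) (grp_invK Hgrp) actM.
by rewrite -E2 -E1 E.
Qed.

Lemma L2all (F : borel X -> \bar R) (y : X) : measurable_fun setT F ->
  \int[lam]_a F (act (inv a) y) = \int[lam]_a F (act a y).
Proof.
move=> mF; rewrite integralE [RHS]integralE.
rewrite (_ : (fun a => F (act (inv a) y))^\+ = F^\+ \o (fun a => act (inv a) y)); last by rewrite -funepos_comp.
rewrite (_ : (fun a => F (act (inv a) y))^\- = F^\- \o (fun a => act (inv a) y)); last by rewrite -funeneg_comp.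
rewrite (_ : (fun a => F (act a y))^\+ = F^\+ \o (fun a => act a y)); last by rewrite -funepos_comp.
rewrite (_ : (fun a => F (act a y))^\- = F^\- \o (fun a => act a y)); last by rewrite -funeneg_comp.
congr (_ - _).
- apply: (@L2ge0 (F^\+) y) => //; exact: measurable_funepos.
- apply: (@L2ge0 (F^\-) y) => //; exact: measurable_funeneg.
Qed.

Lemma L3 (F : borel X -> \bar R) (y : X) (h : G) : measurable_fun setT F ->
  \int[lam]_g F (act g (act h y)) = \int[lam]_g F (act g y).
Proof.
move=> mF; rewrite -(L2all (act h y) mF) -(L2all y mF).
have mPsi2 : measurable_fun setT (fun c : borel G => F (act (inv c) y)).
  exact: (measurableT_comp (measurableT_comp mF (mact_l y)) minv).
rewrite -(Linv (inv h) mPsi2).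
apply: eq_integral => g _.
by rewrite (grp_invM Hgrp) (grp_invK Hgrp) actM.
Qed.

Lemma fbar_inv (k : nat) (f : borel X -> 'rV[R]_k) : vmeasurable f ->
  Pilot.Defs.invariant act (orbit_avg lam act f).
Proof.
move=> mf h x; apply/rowP => i; rewrite !mxE /Rintegral; congr fine.
apply: (@L3 (fun z => (f z ord0 i)%:E) x h).
by apply/measurable_EFinP; exact: mf.
Qed.

Section Avg.
Variables (k : nat) (ip : 'rV[R]_k -> 'rV[R]_k -> R).
Hypothesis Hip : is_inner_product ip.
Variable f : borel X -> 'rV[R]_k.
Hypothesis Hf : inL2 mu ip f.

Let fbar : borel X -> 'rV[R]_k := orbit_avg lam act f.
Let mf : vmeasurable f. Proof. by case: Hf. Qed.

Let mQ2 : measurable_fun setT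
  (fun p : (borel G * borel X)%type => (ip (f (act p.1 p.2)) (f (act p.1 p.2)))%:E).
Proof. exact: (measurableT_comp (Q_meas Hip mf) Hactm). Qed.

Let Q2_ge0 (p : (borel G * borel X)%type) :
  0 <= (ip (f (act p.1 p.2)) (f (act p.1 p.2)))%:E.
Proof. by rewrite lee_fin (Q_ge0 Hip). Qed.

Lemma T1 : \int[mu]_x \int[lam]_g (ip (f (act g x)) (f (act g x)))%:E
  = L2norm2 mu ip f.
Proof.
rewrite -(fubini_tonelli _ mQ2 Q2_ge0) /=.
rewrite (eq_integral (fun _ => L2norm2 mu ip f)) ?int_cst_prob //.
move=> g _; rewrite /L2norm2.
have P := push_int (mact_r g) (Hmu g) (Q_meas Hip mf).
exact: P.
Qed.

Definition good x := lam.-integrable setT (fun g => (ip (f (act g x)) (f (act g x)))%:E).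

Lemma ae_good : {ae mu, forall x, good x}.
Proof.
have mH := measurable_fun_fubini_tonelli_G (m1 := lam) _ mQ2 Q2_ge0.
have iH : mu.-integrable setT (fubini_G lam
    (fun p : (borel G * borel X)%type => (ip (f (act p.1 p.2)) (f (act p.1 p.2)))%:E)).
  apply/integrableP; split => //.
  rewrite (eq_integral (fun x : borel X => \int[lam]_g (ip (f (act g x)) (f (act g x)))%:E)).
    by rewrite T1; case: Hf.
  move=> x _; rewrite gee0_abs //; apply: integral_ge0 => g _.
  by rewrite lee_fin (Q_ge0 Hip).
have := integrable_ae measurableT iH.
apply: filterS => x /(_ I) Hx.
apply/integrableP; split.
  exact: (measurableT_comp (Q_meas Hip mf) (mact_l x)).
rewrite (eq_integral (fun g : borel G => (ip (f (act g x)) (f (act g x)))%:E)).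
  by move: Hx; rewrite /fubini_G => /fin_numPlt /andP[].
by move=> g _; rewrite gee0_abs // lee_fin (Q_ge0 Hip).
Qed.

Lemma goodL2 x : good x -> inL2 lam ip (fun g => f (act g x)).
Proof.
move=> gx; split.
  by move=> i; exact: (measurableT_comp (mf i) (mact_l x)).
exact: (integrable_lty measurableT gx).
Qed.

Lemma cstL2 (v : 'rV[R]_k) : inL2 lam ip (fun _ : borel G => v).
Proof.
split; first by move=> i; exact: measurable_cst.
by rewrite /L2norm2 int_cst_prob ltry.
Qed.

Lemma avg_coord x i : good x ->
  \int[lam]_g (f (act g x) ord0 i)%:E = (fbar x ord0 i)%:E.
Proof.
move=> gx; rewrite /fbar /orbit_avg mxE /Rintegral fineK //.
apply: (integrable_fin_num measurableT).
exact: (coord_int Hip i (goodL2 gx)).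
Qed.

Lemma avg_ip x w : good x ->
  \int[lam]_g (ip (f (act g x)) w)%:E = (ip (fbar x) w)%:E.
Proof.
move=> gx.
rewrite (eq_integral (fun g : borel G => \sum_(i < k)
    ((f (act g x) ord0 i)%:E * (ip (delta_mx ord0 i) w)%:E))); last first.
  move=> g _; rewrite (ip_expand Hip) -sumEFin.
  by apply: eq_bigr => i _; rewrite EFinM.
rewrite integral_sum //; last first.
  move=> i; apply: (integrableZr measurableT).
  exact: (coord_int Hip i (goodL2 gx)).
rewrite (ip_expand Hip) -sumEFin; apply: eq_bigr => i _.
rewrite integralZr //; last exact: (coord_int Hip i (goodL2 gx)).
by rewrite avg_coord // EFinM.
Qed.

Lemma jensen x : good x ->
  (ip (fbar x) (fbar x))%:E <= \int[lam]_g (ip (f (act g x)) (f (act g x)))%:E.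
Proof.
move=> gx; set v := fbar x.
have iQ := Q_int Hip (goodL2 gx).
have iip := ip_int Hip (goodL2 gx) (cstL2 v).
have h0 : 0 <= \int[lam]_g (ip (f (act g x) - v) (f (act g x) - v))%:E.
  by apply: integral_ge0 => g _; rewrite lee_fin (Q_ge0 Hip).
have iZ := integrableZl measurableT (-2) iip.
have iS := integrableD measurableT iQ iZ.
have iC := finite_measure_integrable_cst lam (ip v v) (@measurableT _ (borel G)).
have e1 := integralD measurableT iS iC.
have e2 := integralD measurableT iQ iZ.
have e3 := integralZl measurableT iip (-2).
rewrite (eq_integral (fun g : borel G => ((ip (f (act g x)) (f (act g x)))%:E
    + ((-2)%:E * (ip (f (act g x)) v)%:E)) + (ip v v)%:E)) in h0; last first.
  by move=> g _; rewrite (QB Hip) -EFinM -!EFinD; congr EFin; ring.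
move: h0; rewrite e1 /= e2 e3 avg_ip // int_cst_prob.
have fin := integrable_fin_num measurableT iQ.
rewrite -(fineK fin) -!EFinM -!EFinD !lee_fin => h0; lra.
Qed.

Lemma fbar_meas : vmeasurable fbar.
Proof.
move=> i.
pose h := fun p : (borel G * borel X)%type => (f (act p.1 p.2) ord0 i)%:E.
have mh : measurable_fun setT h.
  by apply/measurable_EFinP; exact: (measurableT_comp (mf i) Hactm).
have mp := measurable_fun_fubini_tonelli_G (m1 := lam) _ (measurable_funepos mh)
  (fun p => funepos_ge0 h p).
have mn := measurable_fun_fubini_tonelli_G (m1 := lam) _ (measurable_funeneg mh)
  (fun p => funeneg_ge0 h p).
have M := measurableT_comp (fine_measurable measurableT) (emeasurable_funB mp mn).
rewrite (_ : (fun x => fbar x ord0 i) = fine \o (fun x => (fubini_G lam h^\+ x - fubini_G lam h^\- x)%E)) //.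
apply/funext => x.
rewrite /fbar /orbit_avg mxE /Rintegral /fubini_G /= integralE.
congr (fine (_ - _)); apply: eq_integral => g _.
  by rewrite !funeposE.
by rewrite !funenegE.
Qed.

Lemma fbarL2 : inL2 mu ip fbar.
Proof.
split; first exact: fbar_meas.
have Hj : {ae mu, forall x, setT x -> (ip (fbar x) (fbar x))%:E <=
    \int[lam]_g (ip (f (act g x)) (f (act g x)))%:E}.
  have := ae_good; apply: (@filterS _ _ (ae_filter_ringOfSetsType mu)) => x gx _; exact: jensen.
apply: (@le_lt_trans _ _ (\int[mu]_x \int[lam]_g (ip (f (act g x)) (f (act g x)))%:E)).
  apply: ae_ge0_le_integral => //.
  - by move=> x _; rewrite lee_fin (Q_ge0 Hip).
  - exact: (Q_meas Hip fbar_meas).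
  - by move=> x _; apply: integral_ge0 => g _; rewrite lee_fin (Q_ge0 Hip).
  - exact: (measurable_fun_fubini_tonelli_G (m1 := lam) _ mQ2 Q2_ge0).
by rewrite T1; case: Hf.
Qed.
Lemma orth (t : borel X -> 'rV[R]_k) : inL2 mu ip t -> Pilot.Defs.invariant act t ->
  \int[mu]_x (ip (f x) (t x))%:E = \int[mu]_x (ip (fbar x) (t x))%:E.
Proof.
move=> ht tinv.
have mt : vmeasurable t by case: ht.
pose hp := fun p : (borel G * borel X)%type => (ip (f (act p.1 p.2)) (t p.2))%:E.
have mhp : measurable_fun setT hp.
  apply/measurable_EFinP.
  apply: (ip_meas Hip (u := fun p : (borel G * borel X)%type => f (act p.1 p.2))
    (v := fun p : (borel G * borel X)%type => t p.2)).
  - by move=> i; exact: (measurableT_comp (mf i) Hactm).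
  - by move=> i; exact: (measurableT_comp (mt i) measurable_snd).
have iQ1 : (lam \x mu).-integrable setT
    (fun p : (borel G * borel X)%type => (ip (f (act p.1 p.2)) (f (act p.1 p.2)))%:E).
  apply/integrableP; split => //.
  rewrite (eq_integral (fun p : (borel G * borel X)%type =>
    (ip (f (act p.1 p.2)) (f (act p.1 p.2)))%:E)); last first.
    by move=> p _; rewrite gee0_abs.
  rewrite (fubini_tonelli1 _ mQ2 Q2_ge0) /fubini_F /=.
  rewrite (eq_integral (fun _ => L2norm2 mu ip f)) ?int_cst_prob; first by case: Hf.
  move=> g _; have P := push_int (mact_r g) (Hmu g) (Q_meas Hip mf); exact: P.
have mQt : measurable_fun setT
    (fun p : (borel G * borel X)%type => (ip (t p.2) (t p.2))%:E).
  exact: (measurableT_comp (Q_meas Hip mt) measurable_snd).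
have Qt0 : forall p : (borel G * borel X)%type, 0 <= (ip (t p.2) (t p.2))%:E.
  by move=> p; rewrite lee_fin (Q_ge0 Hip).
have iQ2 : (lam \x mu).-integrable setT
    (fun p : (borel G * borel X)%type => (ip (t p.2) (t p.2))%:E).
  apply/integrableP; split => //.
  rewrite (eq_integral (fun p : (borel G * borel X)%type =>
    (ip (t p.2) (t p.2))%:E)); last by move=> p _; rewrite gee0_abs.
  rewrite (fubini_tonelli1 _ mQt Qt0) /fubini_F /=.
  rewrite (eq_integral (fun _ => L2norm2 mu ip t)) ?int_cst_prob //; by case: ht.
have ihp : (lam \x mu).-integrable setT hp.
  apply: (le_integrable measurableT mhp _ (integrableD measurableT iQ1 iQ2)).
  move=> p _; rewrite /hp /= !lee_fin [X in (_ <= X)%R]ger0_norm.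
    exact: (ip_bound Hip).
  by rewrite addr_ge0 // (Q_ge0 Hip).
have E := Fubini ihp.
rewrite /hp /= in E.
have mft : measurable_fun setT (fun x => (ip (f x) (t x))%:E).
  by apply/measurable_EFinP; exact: (ip_meas Hip mf mt).
have E1 : \int[lam]_g \int[mu]_x (ip (f (act g x)) (t x))%:E
    = \int[mu]_x (ip (f x) (t x))%:E.
  rewrite (eq_integral (fun _ => \int[mu]_x (ip (f x) (t x))%:E)) ?int_cst_prob //.
  move=> g _.
  transitivity (\int[mu]_x (ip (f (act g x)) (t (act g x)))%:E).
    by apply: eq_integral => x _; rewrite tinv.
  have P := push_int (mact_r g) (Hmu g) mft; exact: P.
have E2 : \int[mu]_x \int[lam]_g (ip (f (act g x)) (t x))%:E
    = \int[mu]_x (ip (fbar x) (t x))%:E.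
  apply: ae_eq_integral => //.
  - exact: (measurable_fubini_G ihp).
  - by apply/measurable_EFinP; exact: (ip_meas Hip fbar_meas mt).
  - have := ae_good; apply: (@filterS _ _ (ae_filter_ringOfSetsType mu)).
    by move=> x gx _; exact: avg_ip.
by rewrite -E1 E E2.
Qed.

Lemma pyth (s : borel X -> 'rV[R]_k) : inS (act : G -> borel X -> borel X) mu ip s ->
  L2norm2 mu ip (fun x => (f x - s x)%R) =
  L2norm2 mu ip (fun x => (f x - fbar x)%R) + L2norm2 mu ip (fun x => (fbar x - s x)%R).
Proof.
move=> [hs sinv].
pose a := fun x => (f x - fbar x)%R; pose b := fun x => (fbar x - s x)%R.
have ha : inL2 mu ip a := inL2B Hip Hf fbarL2.
have hb : inL2 mu ip b := inL2B Hip fbarL2 hs.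
have binv : Pilot.Defs.invariant act b.
  have fi := fbar_inv mf; move=> g x; rewrite /b sinv; congr (_ - _)%R; exact: fi.
have iA := Q_int Hip ha; have iB := Q_int Hip hb; have iAB := ip_int Hip ha hb.
have e0 : \int[mu]_x (ip (a x) (b x))%:E = 0.
  rewrite (eq_integral (fun x => (ip (f x) (b x))%:E - (ip (fbar x) (b x))%:E)); last first.
    by move=> x _; rewrite /a (ipBl Hip) EFinB.
  have i1 := ip_int Hip Hf hb; have i2 := ip_int Hip fbarL2 hb.
  have e := integralB measurableT i1 i2.
  rewrite /= in e; rewrite e orth // subee //.
  exact: (integrable_fin_num measurableT i2).
have iZ := integrableZl measurableT 2 iAB.
have iS := integrableD measurableT iA iZ.
have e1 := integralD measurableT iS iB.
have e2 := integralD measurableT iA iZ.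
have e3 := integralZl measurableT iAB 2.
rewrite /L2norm2.
rewrite (eq_integral (fun x => ((ip (a x) (a x))%:E + (2%:E * (ip (a x) (b x))%:E))
    + (ip (b x) (b x))%:E)); last first.
  move=> x _; rewrite -EFinM -!EFinD -(QD Hip).
  by rewrite /a /b addrA subrK.
by rewrite e1 /= e2 e3 e0 mule0 adde0.
Qed.
Lemma main_res :
  [/\ inL2 mu ip fbar,
      class_inS (act : G -> borel X -> borel X) mu ip fbar,
      (forall s, inS (act : G -> borel X -> borel X) mu ip s ->
         (L2norm2 mu ip (fun x => (f x - fbar x)%R) <= L2norm2 mu ip (fun x => (f x - s x)%R))) &
      (forall h, inL2 mu ip h -> class_inS (act : G -> borel X -> borel X) mu ip h ->
         (forall s, inS (act : G -> borel X -> borel X) mu ip s ->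
            (L2norm2 mu ip (fun x => (f x - h x)%R) <= L2norm2 mu ip (fun x => (f x - s x)%R))) ->
         {ae mu, forall x, h x = fbar x})].
Proof.
have fS : inS (act : G -> borel X -> borel X) mu ip fbar.
  split; first exact: fbarL2.
  exact: (fbar_inv mf).
split.
- exact: fbarL2.
- by exists fbar => //; exact: aeW.
- move=> s hs; rewrite (pyth hs); apply: leeDl; apply: integral_ge0 => x _.
  by rewrite lee_fin (Q_ge0 Hip).
- move=> h hh [s0 hs0 hae] hmin.
  have m := hmin fbar fS.
  have ms0 : vmeasurable s0 by case: hs0 => -[].
  have e1 : L2norm2 mu ip (fun x => (f x - h x)%R) = L2norm2 mu ip (fun x => (f x - s0 x)%R).
    rewrite /L2norm2; apply: ae_eq_integral => //.
    - exact: (Q_meas Hip (vmeasB mf hh.1)).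
    - exact: (Q_meas Hip (vmeasB mf ms0)).
    - move: hae; apply: (@filterS _ _ (ae_filter_ringOfSetsType mu)) => x hx _.
      by rewrite hx.
  rewrite e1 (pyth hs0) in m.
  have fin : L2norm2 mu ip (fun x => (f x - fbar x)%R) \is a fin_num.
    exact: (integrable_fin_num measurableT (Q_int Hip (inL2B Hip Hf fbarL2))).
  have z : L2norm2 mu ip (fun x => (fbar x - s0 x)%R) = 0.
    apply/eqP; rewrite eq_le; apply/andP; split.
      by move: m; rewrite -[X in _ <= X]adde0 leeD2lE.
    by apply: integral_ge0 => x _; rewrite lee_fin (Q_ge0 Hip).
  have H2 : ae_eq mu setT (fun x => (ip (fbar x - s0 x)%R (fbar x - s0 x)%R)%:E) (cst 0).
    apply/(ae_eq_integral_abs mu measurableT (Q_meas Hip (vmeasB fbar_meas ms0))).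
    rewrite -z /L2norm2; apply: eq_integral => x _.
    by rewrite gee0_abs // lee_fin (Q_ge0 Hip).
  apply: (@filterS2 _ _ (ae_filter_ringOfSetsType mu) _ _ _ _ hae H2).
  move=> x hx /(_ I) [/(Q_eq0 Hip) /eqP].
  by rewrite subr_eq0 hx => /eqP ->.
Qed.

End Avg.

End Main.

Unset Implicit Arguments.

Theorem proposition3p9
  (R : realType) (k : nat)
  (G : ptopologicalType) (mul : G -> G -> G) (inv : G -> G) (one : G)
  (HG : is_topological_group mul inv one)
  (HGc : compact [set: G]) (HGh : hausdorff_space G) (HGs : @second_countable G)
  (lam : probability (borel G) R) (Hlam : is_haar_probability mul lam)
  (X : ptopologicalType) (HX : is_polish R X)
  (act : G -> X -> X) (Hact : is_action mul one act)
  (Hactm : measurable_fun setT (fun p : (borel G * borel X)%type => (act p.1 p.2 : borel X)))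
  (mu : probability (borel X) R)
  (Hmu : forall (g : G) (A : set (borel X)), measurable A -> mu (act g @^-1` A) = mu A)
  (ip : 'rV[R]_k -> 'rV[R]_k -> R) (Hip : is_inner_product ip)
  (f : borel X -> 'rV[R]_k) (Hf : inL2 mu ip f) :
  let fbar := orbit_avg lam act f in
  [/\ inL2 mu ip fbar,
      class_inS (act : G -> borel X -> borel X) mu ip fbar,
      (forall s, inS (act : G -> borel X -> borel X) mu ip s ->
         (L2norm2 mu ip (fun x => (f x - fbar x)%R) <= L2norm2 mu ip (fun x => (f x - s x)%R))%E) &
      (forall h, inL2 mu ip h -> class_inS (act : G -> borel X -> borel X) mu ip h ->
         (forall s, inS (act : G -> borel X -> borel X) mu ip s ->
            (L2norm2 mu ip (fun x => (f x - h x)%R) <= L2norm2 mu ip (fun x => (f x - s x)%R))%E) ->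
         {ae mu, forall x, h x = fbar x})].

Proof. exact: (main_res HG Hlam Hact Hactm Hmu Hip Hf). Qed.
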